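(* Let $S$ be a commutative semiring and $\mathcal G$ an ample groupoid. Define the relation $\equiv$ on $A_S(\mathcal G)$ by $f\equiv g$ iff $f(\alpha)=g(\alpha)$ for all $\alpha\in\mathcal G$ with $s(\alpha),r(\alpha)\in\mathcal T$. Then $\equiv$ is a congruence on $A_S(\mathcal G)$ (and it is moreover compatible with $S$-scalar multiplication).
   Context: A commutative semiring has commutative monoid addition (neutral $0$), commutative associative multiplication with $1$, distributivity and absorbing $0$. An ample groupoid is a topological groupoid whose unit space $\mathcal G^{(0)}$ is locally compact Hausdorff and totally disconnected and whose source and range maps $s,r$ are local homeomorphisms. $\mathcal T=\{u\in\mathcal G^{(0)}:\{\gamma\in\mathcal G: s(\gamma)=r(\gamma)=u\}=\{u\}\}$ is the set of units with trivial isotropy group. The Steinberg algebra $A_S(\mathcal G)$ is the set of functions $\mathcal G\to S$ of the form $\sum_{U\in F}s_U1_U$ with $F$ a finite set of compact open bisections (subsets on which $s,r$ are homeomorphisms onto their images), with pointwise addition and convolution $(f*g)(\gamma)=\sum_{\alpha\beta=\gamma}f(\alpha)g(\beta)$. A congruence on a hemiring $R$ is an equivalence relation $\sim$ such that $r\sim s$ implies $t+r\sim t+s$, $tr\sim ts$, $rt\sim st$ for all $t\in R$. *)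

(* Defs.v *)
From HB Require Import structures.
From mathcomp Require Import all_boot all_order all_algebra.
From mathcomp Require Import boolp classical_sets functions fsbigop topology.
Set Implicit Arguments. Unset Strict Implicit. Unset Printing Implicit Defensive.
Import GRing.Theory.
Local Open Scope classical_set_scope.
Local Open Scope ring_scope.

(** Abstract groupoid on a carrier [G]; the unit space is embedded in [G]
    as the set of fixed points of [src]. [mul a b] is meaningful when
    [src a = rng b] (composable pair (a,b)). *)
Record groupoid (G : Type) := Groupoid {
  src : G -> G;
  rng : G -> G;
  inv : G -> G;
  mul : G -> G -> G;
  src_rng : forall a, src (rng a) = rng a;
  rng_src : forall a, rng (src a) = src a;
  src_mul : forall a b, src a = rng b -> src (mul a b) = src b;
  rng_mul : forall a b, src a = rng b -> rng (mul a b) = rng a;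
  mulA : forall a b c, src a = rng b -> src b = rng c ->
           mul (mul a b) c = mul a (mul b c);
  mul_rng : forall a, mul (rng a) a = a;
  mul_src : forall a, mul a (src a) = a;
  src_inv : forall a, src (inv a) = rng a;
  rng_inv : forall a, rng (inv a) = src a;
  mul_inv : forall a, mul a (inv a) = rng a;
  inv_mul : forall a, mul (inv a) a = src a
}.

Section Defs.
Context {G : topologicalType} (g : groupoid G).

Definition units : set G := [set u | src g u = u].

Definition composable : set (G * G) := [set p | src g p.1 = rng g p.2].

Definition open_in (B A : set G) := exists V, open V /\ A = V `&` B.

Definition homeo_onto_image (f : G -> G) (U : set G) :=
  [/\ ({in U &, injective f}), {within U, continuous f} &
      forall O, open O -> open_in (f @` U) (f @` (O `&` U))].

Definition local_homeo_to_units (f : G -> G) :=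
  (forall x, units (f x)) /\
  forall x, exists U, [/\ open U, U x, open_in units (f @` U) &
                          homeo_onto_image f U].

Definition units_lc_hausdorff_td :=
  [/\
      (forall x y, units x -> units y -> x <> y ->
         exists U V, [/\ open U, open V, U x, V y & (U `&` V `&` units = set0)]),
      (forall x, units x -> exists K, [/\ compact K, (K `<=` units) &
          (exists V, [/\ open V, V x & (V `&` units `<=` K)])]) &
      totally_disconnected units].

Definition ample :=
  [/\ {within composable, continuous (fun p => mul g p.1 p.2)},
      continuous (inv g),
      units_lc_hausdorff_td,
      local_homeo_to_units (src g) &
      local_homeo_to_units (rng g)].

Definition trivial_isotropy : set G :=
  [set u | units u /\ forall a, src g a = u -> rng g a = u -> a = u].

Definition compact_open_bisection (U : set G) :=
  [/\ open U, compact U, homeo_onto_image (src g) U &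
      homeo_onto_image (rng g) U].

Definition indic1 {S : pzSemiRingType} (U : set G) (x : G) : S :=
  if x \in U then 1 else 0.

Definition steinberg (S : pzSemiRingType) : set (G -> S) :=
  [set f | exists l : seq (S * set G),
     (forall p, p \in l -> compact_open_bisection p.2) /\
     f = fun x => \sum_(p <- l) p.1 * indic1 p.2 x].

(** convolution (f*g)(c) = sum_{ab = c} f a g b ; the sum is over a finite
    support whenever f, g are in A_S(G) *)
Definition conv {S : pzSemiRingType} (f h : G -> S) : G -> S :=
  fun c => \sum_(p \in [set p : G * G | composable p /\ mul g p.1 p.2 = c])
             f p.1 * h p.2.

Definition equivT {S : pzSemiRingType} (f h : G -> S) :=
  forall a, trivial_isotropy (src g a) -> trivial_isotropy (rng g a) -> f a = h a.

End Defs.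

(* Main.v *)
Require Import Defs.
From HB Require Import structures.
From mathcomp Require Import all_boot all_order all_algebra.
From mathcomp Require Import boolp classical_sets functions fsbigop topology.
Local Open Scope classical_set_scope.
Local Open Scope ring_scope.

Lemma triv_rng_src (G : topologicalType) (g : groupoid G) (a : G) :
  trivial_isotropy g (rng g a) -> trivial_isotropy g (src g a).
Proof.
move=> [_ Ht]; split.
  by rewrite /units /= -(Defs.rng_inv g a) Defs.src_rng.
move=> x Hs Hr.
set y := Defs.mul g (Defs.mul g a x) (Defs.inv g a).
have c1 : src g a = rng g x by rewrite Hr.
have c2 : src g (Defs.mul g a x) = rng g (Defs.inv g a) by rewrite Defs.src_mul // Hs Defs.rng_inv.
have Hy : y = rng g a.
  apply: Ht.
    by rewrite /y Defs.src_mul // Defs.src_inv.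
  by rewrite /y Defs.rng_mul // Defs.rng_mul.
have Hya : Defs.mul g y a = Defs.mul g a x.
  rewrite /y Defs.mulA //; last by rewrite Defs.src_inv.
  by rewrite Defs.inv_mul -[in RHS](Defs.mul_src g (Defs.mul g a x)) Defs.src_mul // Hs.
have : Defs.mul g (Defs.inv g a) (Defs.mul g y a) = src g a.
  by rewrite Hy Defs.mul_rng Defs.inv_mul.
rewrite Hya -Defs.mulA ?Defs.src_inv ?Defs.rng_inv //.
by rewrite Defs.inv_mul c1 Defs.mul_rng.
Qed.

Theorem lemma3p5 (S : comPzSemiRingType) (G : topologicalType)
  (g : groupoid G) (Hample : ample g) :
  let A := @steinberg G g S in
  (* equivalence relation on A_S(G) *)
  (forall f, A f -> equivT g f f) /\
  (forall f h, A f -> A h -> equivT g f h -> equivT g h f) /\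
  (forall f h k, A f -> A h -> A k ->
     equivT g f h -> equivT g h k -> equivT g f k) /\
  (* compatibility with addition and (two-sided) convolution *)
  (forall f h k, A f -> A h -> A k -> equivT g f h ->
     [/\ equivT g (k \+ f) (k \+ h),
         equivT g (conv g k f) (conv g k h) &
         equivT g (conv g f k) (conv g h k)]) /\
  (* compatibility with S-scalar multiplication *)
  (forall (c : S) f h, A f -> A h -> equivT g f h ->
     equivT g (fun x => c * f x) (fun x => c * h x)).
Proof.
move=> A; split; first by [].
split; first by move=> f h _ _ E a s r; rewrite E.
split; first by move=> f h k _ _ _ E1 E2 a s r; rewrite E1 ?E2.
split; last by move=> c f h _ _ E a s r; rewrite E.
move=> f h k _ _ _ E; split.
- by move=> a s r /=; rewrite E.
- move=> c s r; rewrite /conv; apply: eq_fsbigr => p.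
  rewrite inE => -[Hc Hm]; rewrite /composable /= in Hc.
  congr (_ * _); apply: E.
    by rewrite -Hm Defs.src_mul in s.
  rewrite -Hc; apply: triv_rng_src.
  by rewrite -Hm Defs.rng_mul in r.
- move=> c s r; rewrite /conv; apply: eq_fsbigr => p.
  rewrite inE => -[Hc Hm]; rewrite /composable /= in Hc.
  congr (_ * _); apply: E; last by rewrite -Hm Defs.rng_mul in r.
  rewrite Hc -(Defs.src_inv g p.2); apply: triv_rng_src.
  by rewrite Defs.rng_inv; rewrite -Hm Defs.src_mul in s.
Qed.
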